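(* Let $G$ be a group, $j\colon K\to L$ a Dwyer $G$-map of $G$-posets, and $f\colon K\to X$ any map of $G$-posets, and form the pushout $Y=L\cup_K X$ in $G\mathbf{Cat}$. Then $Y$ is a $G$-poset, and for every subgroup $H\le G$ the square of $H$-fixed points $K^H\to X^H$, $K^H\to L^H$, $X^H\to Y^H$, $L^H\to Y^H$ is a pushout (in $\mathbf{Cat}$, equivalently in $\mathbf{Pos}$).
   Context: A subcategory $\mathcal{S}$ of $\mathcal{C}$ is a sieve if every morphism $c\to s$ with $s\in\mathcal{S}$ lies in $\mathcal{S}$ together with $c$; a cosieve dually. A Dwyer $G$-map is a $G$-functor that is the inclusion of a sieve and factors equivariantly as $\mathcal{S}\xrightarrow{i}\mathcal{T}\xrightarrow{j}\mathcal{C}$ with $j$ the inclusion of a cosieve and $i$ an inclusion with an equivariant right adjoint $r$ whose unit $\mathrm{id}\to r\circ i$ is the identity. Posets are regarded as categories; $X^H$ denotes the subposet of $H$-fixed elements. *)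

(* Defs.v *)
From Stdlib Require Import ProofIrrelevance Eqdep.

Set Implicit Arguments.
Unset Strict Implicit.

Record Cat := {
  Ob :> Type;
  Hom : Ob -> Ob -> Type;
  idm : forall x, Hom x x;
  cmp : forall x y z, Hom y z -> Hom x y -> Hom x z;
  cmp_id_l : forall x y (m : Hom x y), cmp (idm y) m = m;
  cmp_id_r : forall x y (m : Hom x y), cmp m (idm x) = m;
  cmp_assoc : forall x y z w (m1 : Hom x y) (m2 : Hom y z) (m3 : Hom z w),
      cmp m3 (cmp m2 m1) = cmp (cmp m3 m2) m1 }.
Arguments Hom {_} _ _.
Arguments idm {_} _.
Arguments cmp {_ _ _ _} _ _.

Definition Arr (C : Cat) := {p : Ob C * Ob C & Hom (fst p) (snd p)}.
Definition mkArr (C : Cat) (x y : C) (m : Hom x y) : Arr C :=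
  existT (fun p : Ob C * Ob C => Hom (fst p) (snd p)) (x, y) m.

Record Functor (C D : Cat) := {
  fo :> Ob C -> Ob D;
  fm : forall x y, Hom x y -> Hom (fo x) (fo y);
  fm_id : forall x, fm (idm x) = idm (fo x);
  fm_cmp : forall x y z (m1 : Hom x y) (m2 : Hom y z),
      fm (cmp m2 m1) = cmp (fm m2) (fm m1) }.
Arguments fm {C D} f {x y} _.

Definition arr (C D : Cat) (F : Functor C D) (a : Arr C) : Arr D :=
  mkArr (fm F (projT2 a)).

Definition feq (C D : Cat) (F F' : Functor C D) : Prop :=
  (forall x, F x = F' x) /\ (forall a, arr F a = arr F' a).

Definition idF (C : Cat) : Functor C C.
Proof.
  refine {| fo := fun x => x; fm := fun x y m => m |}; reflexivity.
Defined.

Definition compF (C D E : Cat) (F' : Functor D E) (F : Functor C D) : Functor C E.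
Proof.
  refine {| fo := fun x => F' (F x); fm := fun x y m => fm F' (fm F m) |}.
  - intros x. rewrite !fm_id. reflexivity.
  - intros. rewrite !fm_cmp. reflexivity.
Defined.

Definition is_poset (C : Cat) : Prop :=
  (forall (x y : C) (m1 m2 : Hom x y), m1 = m2) /\
  (forall x y : C, Hom x y -> Hom y x -> x = y).

Definition is_pushout (A B C D : Cat) (f : Functor A B) (g : Functor A C)
    (u : Functor B D) (v : Functor C D) : Prop :=
  feq (compF u f) (compF v g) /\
  forall (Z : Cat) (p : Functor B Z) (q : Functor C Z),
    feq (compF p f) (compF q g) ->
    exists w : Functor D Z,
      feq (compF w u) p /\ feq (compF w v) q /\
      forall w' : Functor D Z, feq (compF w' u) p -> feq (compF w' v) q -> feq w' w.

Record Group := {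
  gcar :> Type;
  gmul : gcar -> gcar -> gcar;
  gone : gcar;
  ginv : gcar -> gcar;
  gmulA : forall a b c, gmul a (gmul b c) = gmul (gmul a b) c;
  gmul1g : forall a, gmul gone a = a;
  gmulVg : forall a, gmul (ginv a) a = gone }.
Arguments gmul {_} _ _.
Arguments gone {_}.
Arguments ginv {_} _.

Definition is_subgroup (G : Group) (H : G -> Prop) : Prop :=
  H gone /\ (forall a b, H a -> H b -> H (gmul a b)) /\ (forall a, H a -> H (ginv a)).

Record GCat (G : Group) := {
  gc :> Cat;
  act : G -> Functor gc gc;
  act_one : feq (act gone) (idF gc);
  act_mul : forall g h, feq (act (gmul g h)) (compF (act g) (act h)) }.
Arguments act {_} _ _.

Definition equivariant (G : Group) (C D : GCat G) (F : Functor C D) : Prop :=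
  forall g : G, feq (compF F (act C g)) (compF (act D g) F).

Record GFunctor (G : Group) (C D : GCat G) := {
  gf :> Functor C D;
  gf_eqv : equivariant gf }.

Definition is_Gpushout (G : Group) (A B C D : GCat G) (f : GFunctor A B)
    (g : GFunctor A C) (u : GFunctor B D) (v : GFunctor C D) : Prop :=
  feq (compF u f) (compF v g) /\
  forall (Z : GCat G) (p : GFunctor B Z) (q : GFunctor C Z),
    feq (compF p f) (compF q g) ->
    exists w : GFunctor D Z,
      feq (compF w u) p /\ feq (compF w v) q /\
      forall w' : GFunctor D Z,
        feq (compF w' u) p -> feq (compF w' v) q -> feq w' w.

Definition injective_fun (A B : Type) (h : A -> B) := forall a b, h a = h b -> a = b.

Definition is_inclusion (C D : Cat) (F : Functor C D) : Prop :=
  injective_fun (fo F) /\ injective_fun (arr F).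

Definition sieve_inclusion (C D : Cat) (F : Functor C D) : Prop :=
  is_inclusion F /\
  forall (s : C) (c : D) (m : Hom c (F s)),
    exists (c' : C) (m' : Hom c' s), arr F (mkArr m') = mkArr m.

Definition cosieve_inclusion (C D : Cat) (F : Functor C D) : Prop :=
  is_inclusion F /\
  forall (s : C) (c : D) (m : Hom (F s) c),
    exists (c' : C) (m' : Hom s c'), arr F (mkArr m') = mkArr m.

Definition adjunction_with_unit (C D : Cat) (i : Functor C D) (r : Functor D C)
    (eta : forall x : C, Hom x (r (i x))) : Prop :=
  (forall (x x' : C) (m : Hom x x'), cmp (fm r (fm i m)) (eta x) = cmp (eta x') m) /\
  exists eps : forall y : D, Hom (i (r y)) y,
    (forall (y y' : D) (m : Hom y y'), cmp m (eps y) = cmp (eps y') (fm i (fm r m))) /\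
    (forall x : C, cmp (eps (i x)) (fm i (eta x)) = idm (i x)) /\
    (forall y : D, cmp (fm r (eps y)) (eta (r y)) = idm (r y)).

Definition dwyer_map (G : Group) (K L : GCat G) (j : GFunctor K L) : Prop :=
  sieve_inclusion j /\
  exists (T : GCat G) (i : GFunctor K T) (jj : GFunctor T L) (r : GFunctor T K)
         (eta : forall x : K, Hom x (r (i x))),
    feq (compF jj i) j /\
    cosieve_inclusion jj /\
    is_inclusion i /\
    @adjunction_with_unit K T i r eta /\
    (forall x : K, mkArr (eta x) = mkArr (idm x)).

Lemma sig_eq (A : Type) (P : A -> Prop) (a b : sig P) :
  proj1_sig a = proj1_sig b -> a = b.
Proof.
  destruct a as [a pa], b as [b pb]; simpl; intros E; subst b.
  f_equal; apply proof_irrelevance.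
Qed.

Lemma mkArr_cmp (C : Cat) (x y z x' y' z' : C) (a : Hom x' y') (b : Hom x y)
    (c : Hom y' z') (d : Hom y z) :
  mkArr a = mkArr b -> mkArr c = mkArr d -> mkArr (cmp c a) = mkArr (cmp d b).
Proof.
  intros E1 E2.
  assert (Ex : x' = x) by exact (f_equal (fun s : Arr C => fst (projT1 s)) E1).
  assert (Ey : y' = y) by exact (f_equal (fun s : Arr C => snd (projT1 s)) E1).
  assert (Ez : z' = z) by exact (f_equal (fun s : Arr C => snd (projT1 s)) E2).
  subst x' y' z'.
  apply inj_pair2 in E1. apply inj_pair2 in E2. subst a c. reflexivity.
Qed.

Section Fix.
Variables (G : Group) (C : GCat G) (H : G -> Prop).

Definition fixob := {x : Ob C | forall h, H h -> act C h x = x}.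
Definition fixhom (x y : fixob) :=
  {m : Hom (proj1_sig x) (proj1_sig y) |
     forall h, H h -> arr (act C h) (mkArr m) = mkArr m}.

Definition fixid (x : fixob) : fixhom x x.
Proof.
  exists (idm (proj1_sig x)). intros h Hh.
  unfold arr; simpl. rewrite fm_id.
  destruct x as [x px]; simpl. rewrite (px h Hh). reflexivity.
Defined.

Definition fixcmp (x y z : fixob) (m2 : fixhom y z) (m1 : fixhom x y) : fixhom x z.
Proof.
  exists (cmp (proj1_sig m2) (proj1_sig m1)). intros h Hh.
  unfold arr; simpl. rewrite fm_cmp.
  apply mkArr_cmp.
  - exact (proj2_sig m1 h Hh).
  - exact (proj2_sig m2 h Hh).
Defined.

Definition FixCat : Cat.
Proof.
  refine {| Ob := fixob; Hom := fixhom; idm := fixid; cmp := fixcmp |}.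
  - intros; apply sig_eq; simpl; apply cmp_id_l.
  - intros; apply sig_eq; simpl; apply cmp_id_r.
  - intros; apply sig_eq; simpl; apply cmp_assoc.
Defined.
End Fix.

Notation "C ^^ H" := (FixCat C H) (at level 30).

Section FixF.
Variables (G : Group) (H : G -> Prop) (C D : GCat G) (F : GFunctor C D).

Definition fixF_ob (x : fixob C H) : fixob D H.
Proof.
  exists (F (proj1_sig x)). intros h Hh. destruct x as [x px]; simpl.
  pose proof (proj1 (gf_eqv F h) x) as E. simpl in E.
  rewrite <- E. rewrite (px h Hh). reflexivity.
Defined.

Definition fixF_hom (x y : fixob C H) (m : fixhom x y) : fixhom (fixF_ob x) (fixF_ob y).
Proof.
  exists (fm F (proj1_sig m)). intros h Hh. destruct m as [m pm]; simpl.
  pose proof (proj2 (gf_eqv F h) (mkArr m)) as E.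
  change (arr (compF (act D h) F) (mkArr m) = arr F (mkArr m)).
  rewrite <- E. change (arr F (arr (act C h) (mkArr m)) = arr F (mkArr m)).
  rewrite (pm h Hh). reflexivity.
Defined.

Definition fixF : Functor (C ^^ H) (D ^^ H).
Proof.
  refine (@Build_Functor (C ^^ H) (D ^^ H) fixF_ob fixF_hom _ _).
  - intros x; apply sig_eq; simpl; apply fm_id.
  - intros; apply sig_eq; simpl; apply fm_cmp.
Defined.
End FixF.
Arguments fixF {G} H {C D} F.

(* Main.v *)
Require Import Defs.
From Stdlib Require Import ProofIrrelevance Eqdep ClassicalEpsilon Setoid Morphisms.
Set Implicit Arguments.
Unset Strict Implicit.


Definition le (C : Cat) (a b : C) : Prop := inhabited (Hom a b).

Definition pick (A : Type) (h : inhabited A) : A :=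
  proj1_sig (constructive_indefinite_description (fun _ : A => True)
    (match h with inhabits a => ex_intro _ a I end)).

Definition hom_unique (C : Cat) := forall (x y : C) (m1 m2 : Hom x y), m1 = m2.

Lemma hu_of (C : Cat) : is_poset C -> hom_unique C.
Proof. intros [H _]; exact H. Qed.

Lemma arr_eq_hu (C : Cat) (hu : hom_unique C) (a b a' b' : C) (m : Hom a b) (m' : Hom a' b') :
  a = a' -> b = b' -> mkArr m = mkArr m'.
Proof. intros; subst. rewrite (hu _ _ m m'). reflexivity. Qed.

Lemma mkArr_inj (C : Cat) (a b : C) (m m' : Hom a b) : mkArr m = mkArr m' -> m = m'.
Proof. intro E. unfold mkArr in E. apply inj_pair2 in E. exact E. Qed.

Definition castid (C : Cat) (a b : C) (E : a = b) : Hom a b :=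
  match E in _ = y return Hom a y with eq_refl => idm a end.

Lemma castid_l (C : Cat) (a b c : C) (E : b = c) (g : Hom a b) :
  mkArr (cmp (castid E) g) = mkArr g.
Proof. destruct E. simpl. rewrite cmp_id_l. reflexivity. Qed.

Lemma castid_r (C : Cat) (a b c : C) (E : a = b) (g : Hom b c) :
  mkArr (cmp g (castid E)) = mkArr g.
Proof. destruct E. simpl. rewrite cmp_id_r. reflexivity. Qed.

Lemma fm_castid (C D : Cat) (F : Functor C D) (a b : C) (E : a = b) :
  fm F (castid E) = castid (f_equal (fo F) E).
Proof. destruct E. simpl. apply fm_id. Qed.

Lemma le_refl (C : Cat) (a : C) : le a a.
Proof. exact (inhabits (idm a)). Qed.
Lemma le_trans (C : Cat) (a b c : C) : le a b -> le b c -> le a c.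
Proof. intros [m1] [m2]. exact (inhabits (cmp m2 m1)). Qed.
Lemma le_map (C D : Cat) (F : Functor C D) (a b : C) : le a b -> le (F a) (F b).
Proof. intros [m]. exact (inhabits (fm F m)). Qed.
Lemma le_antisym (C : Cat) (a b : C) : is_poset C -> le a b -> le b a -> a = b.
Proof. intros [_ H] [m1] [m2]. exact (H _ _ m1 m2). Qed.

Lemma feq_refl (C D : Cat) (F : Functor C D) : feq F F.
Proof. split; reflexivity. Qed.
Lemma feq_sym (C D : Cat) (F F' : Functor C D) : feq F F' -> feq F' F.
Proof. intros [H1 H2]; split; intros; symmetry; auto. Qed.
Lemma feq_trans (C D : Cat) (F F' F'' : Functor C D) : feq F F' -> feq F' F'' -> feq F F''.
Proof. intros [H1 H2] [H3 H4]; split; intros; etransitivity; eauto. Qed.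

Add Parametric Relation (C D : Cat) : (Functor C D) (@feq C D)
  reflexivity proved by (@feq_refl C D)
  symmetry proved by (@feq_sym C D)
  transitivity proved by (@feq_trans C D) as feq_rel.

Add Parametric Morphism (C D E : Cat) : (@compF C D E)
  with signature (@feq D E) ==> (@feq C D) ==> (@feq C E) as compF_mor.
Proof.
  intros G G' [H1 H2] F F' [H3 H4]; split.
  - intros x; simpl. rewrite H3. apply H1.
  - intros a. change (arr G (arr F a) = arr G' (arr F' a)). rewrite H4. apply H2.
Qed.

Lemma feq_assoc (A B C D : Cat) (F : Functor C D) (F' : Functor B C) (F'' : Functor A B) :
  feq (compF (compF F F') F'') (compF F (compF F' F'')).
Proof. split; reflexivity. Qed.
Lemma feq_idl (C D : Cat) (F : Functor C D) : feq (compF (idF D) F) F.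
Proof. split; reflexivity. Qed.
Lemma feq_idr (C D : Cat) (F : Functor C D) : feq (compF F (idF C)) F.
Proof. split; reflexivity. Qed.

Lemma feq_hu (C D : Cat) (F F' : Functor C D) : hom_unique D -> (forall x, F x = F' x) -> feq F F'.
Proof. intros hu H; split; auto. intros [[x y] m]. unfold arr; simpl. apply arr_eq_hu; auto. Qed.

Definition mkPF (C D : Cat) (hu : hom_unique D) (o : C -> D)
  (mo : forall x y, Hom x y -> Hom (o x) (o y)) : Functor C D.
Proof. refine {| fo := o; fm := mo |}; intros; apply hu. Defined.

Lemma cmp_f_equal2 (C : Cat) (x y z : C) (a a' : Hom y z) (b b' : Hom x y) :
  a = a' -> b = b' -> cmp a b = cmp a' b'.
Proof. intros; subst; reflexivity. Qed.

Record DD := {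
  dK : Cat; dL : Cat; dX : Cat; dT : Cat;
  dj : Functor dK dL; df : Functor dK dX; di : Functor dK dT;
  djj : Functor dT dL; dr : Functor dT dK;
  pK : is_poset dK; pL : is_poset dL; pX : is_poset dX; pT : is_poset dT;
  Hjo : forall k, djj (di k) = dj k;
  Hri : forall k, dr (di k) = k;
  Heps : forall t, le (di (dr t)) t;
  Hjjinj : forall t t', djj t = djj t' -> t = t';
  Hjjfull : forall t t', le (djj t) (djj t') -> le t t';
  Hsieve : forall k l, le l (dj k) -> exists k', dj k' = l;
  Hcosieve : forall t l, le (djj t) l -> exists t', djj t' = l }.

Section Core.
Variable D : DD.
Local Notation K := (dK D).
Local Notation L := (dL D).
Local Notation X := (dX D).
Local Notation T := (dT D).
Local Notation j := (dj D).
Local Notation f := (df D).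
Local Notation i := (di D).
Local Notation jj := (djj D).
Local Notation r := (dr D).

Lemma jinj k k' : j k = j k' -> k = k'.
Proof.
  rewrite <- !(@Hjo D). intro E. apply (@Hjjinj D) in E.
  rewrite <- (@Hri D k), <- (@Hri D k'), E. reflexivity.
Qed.

Lemma adj1 k t : le (j k) (jj t) -> le k (r t).
Proof. rewrite <- (@Hjo D). intro H. apply (@Hjjfull D) in H. apply (le_map r) in H. rewrite (@Hri D) in H. exact H. Qed.

Lemma adj2 k t : le k (r t) -> le (j k) (jj t).
Proof. intro H. rewrite <- (@Hjo D). apply le_map. eapply le_trans; [apply le_map; exact H|]. apply (@Heps D). Qed.

Lemma jfull k k' : le (j k) (j k') -> le k k'.
Proof. intro H. rewrite <- (@Hjo D k') in H. apply adj1 in H. rewrite (@Hri D) in H. exact H. Qed.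

Lemma jr_le t l : jj t = l -> le (j (r t)) l.
Proof. intro E; subst. apply adj2. apply le_refl. Qed.

Definition notK (l : L) : Prop := ~ exists k, j k = l.
Definition PO : Type := (X + {l : L | notK l})%type.
Definition leP (a b : PO) : Prop :=
  match a, b with
  | inl x, inl x' => le x x'
  | inr l, inr l' => le (proj1_sig l) (proj1_sig l')
  | inl x, inr l => exists t, jj t = proj1_sig l /\ le x (f (r t))
  | inr _, inl _ => False
  end.

Lemma leP_refl a : leP a a.
Proof. destruct a; simpl; apply le_refl. Qed.

Lemma leP_trans a b c : leP a b -> leP b c -> leP a c.
Proof.
  destruct a as [x|l], b as [y|l'], c as [z|l'']; simpl; try tauto.
  - apply le_trans.
  - intros H1 [t [Et Ht]]. exists t; split; auto. eapply le_trans; eauto.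
  - intros [t [Et Ht]] H2. rewrite <- Et in H2.
    destruct (@Hcosieve D _ _ H2) as [t' Et'].
    exists t'; split; auto. eapply le_trans; [exact Ht|].
    apply le_map. apply le_map. apply (@Hjjfull D). rewrite Et'. exact H2.
  - apply le_trans.
Qed.

Definition PCat : Cat.
Proof.
  refine {| Ob := PO; Hom := leP; idm := leP_refl;
            cmp := fun a b c m2 m1 => leP_trans m1 m2 |}; intros; apply (proof_irrelevance (leP _ _)).
Defined.

Lemma hu_P : hom_unique PCat.
Proof. intros x y m1 m2; apply (proof_irrelevance (leP x y)). Qed.

Lemma P_poset : is_poset PCat.
Proof.
  split; [apply hu_P|].
  intros [x|[l Hl]] [y|[l' Hl']]; simpl; try tauto.
  - intros H1 H2. f_equal. apply (le_antisym (@pX D)); auto.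
  - intros H1 H2. f_equal. apply sig_eq; simpl. apply (le_antisym (@pL D)); auto.
Qed.

Definition uPo (l : L) : PO :=
  match excluded_middle_informative (exists k, j k = l) with
  | left H => inl (f (proj1_sig (constructive_indefinite_description _ H)))
  | right H => inr (exist _ l H)
  end.

Lemma uPo_K k : uPo (j k) = inl (f k).
Proof.
  unfold uPo. destruct (excluded_middle_informative _) as [H|H].
  - destruct (constructive_indefinite_description _ H) as [k' Ek]; simpl.
    rewrite (jinj Ek). reflexivity.
  - exfalso; apply H; exists k; reflexivity.
Qed.

Lemma uPo_nK l (H : notK l) : uPo l = inr (exist _ l H).
Proof.
  unfold uPo. destruct (excluded_middle_informative _) as [H'|H'].
  - contradiction.
  - f_equal. apply sig_eq. reflexivity.
Qed.

Lemma uPo_cases l : (exists k, j k = l /\ uPo l = inl (f k)) \/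
                    (exists H : notK l, uPo l = inr (exist _ l H)).
Proof.
  destruct (excluded_middle_informative (exists k, j k = l)) as [[k Ek]|H].
  - left. exists k; split; auto. subst. apply uPo_K.
  - right. exists H. apply uPo_nK.
Qed.

Lemma uP_mono (l l' : L) : Hom l l' -> leP (uPo l) (uPo l').
Proof.
  intro m.
  destruct (uPo_cases l) as [[k [Ek Eu]]|[Hn Eu]]; rewrite Eu;
  destruct (uPo_cases l') as [[k' [Ek' Eu']]|[Hn' Eu']]; rewrite Eu'; simpl; subst.
  - apply le_map. apply jfull. exact (inhabits m).
  - destruct (@Hcosieve D (i k) l') as [t Et].
    { rewrite (@Hjo D). exact (inhabits m). }
    exists t; split; auto. apply le_map. apply adj1. rewrite Et. exact (inhabits m).
  - apply Hn. apply (@Hsieve D k'). exact (inhabits m).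
  - exact (inhabits m).
Qed.

Definition uP : Functor L PCat := @mkPF L PCat hu_P uPo uP_mono.
Definition vP : Functor X PCat := @mkPF X PCat hu_P (fun x => inl x) (fun x y m => inhabits m).

Lemma PO_comm : feq (compF uP j) (compF vP f).
Proof. apply feq_hu; [apply hu_P|]. intros k; simpl. apply uPo_K. Qed.

Section Univ.
Variables (Z : Cat) (p : Functor L Z) (q : Functor X Z).
Hypothesis Hpq : feq (compF p j) (compF q f).

Definition EO k : q (f k) = p (j k) := eq_sym (proj1 Hpq k).

Definition cross x l k (h1 : le x (f k)) (h2 : le (j k) l) : Hom (q x) (p l) :=
  cmp (fm p (pick h2)) (cmp (castid (EO k)) (fm q (pick h1))).

Lemma cross_nat k k' (mm : Hom k k') :
  cmp (fm p (fm j mm)) (castid (EO k)) = cmp (castid (EO k')) (fm q (fm f mm)).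
Proof.
  apply mkArr_inj. rewrite castid_r, castid_l.
  exact (proj2 Hpq (mkArr mm)).
Qed.

Lemma cross_mono x l k k'' (m : le k k'') h1 h2 h1'' h2'' :
  @cross x l k h1 h2 = @cross x l k'' h1'' h2''.
Proof.
  unfold cross. set (mm := pick m).
  assert (E1 : pick h1'' = cmp (fm f mm) (pick h1)) by apply (hu_of (@pX D)).
  assert (E2 : pick h2 = cmp (pick h2'') (fm j mm)) by apply (hu_of (@pL D)).
  rewrite E1, E2, !fm_cmp.
  rewrite <- !cmp_assoc. f_equal.
  rewrite !cmp_assoc. f_equal. apply cross_nat.
Qed.

Lemma cross_indep x l k k' h1 h2 h1' h2' :
  @cross x l k h1 h2 = @cross x l k' h1' h2'.
Proof.
  destruct (@Hcosieve D (i k) l) as [t Et]. { rewrite (@Hjo D). exact h2. }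
  assert (Hk : le k (r t)) by (apply adj1; rewrite Et; exact h2).
  assert (Hk' : le k' (r t)) by (apply adj1; rewrite Et; exact h2').
  assert (hx : le x (f (r t))) by (eapply le_trans; [exact h1| apply le_map; exact Hk]).
  rewrite (@cross_mono x l k (r t) Hk h1 h2 hx (jr_le Et)).
  rewrite (@cross_mono x l k' (r t) Hk' h1' h2' hx (jr_le Et)).
  reflexivity.
Qed.

Definition wcross x (l : L) (H : exists t, jj t = l /\ le x (f (r t))) : Hom (q x) (p l) :=
  match constructive_indefinite_description _ H with
  | exist _ t Ht => @cross x l (r t) (proj2 Ht) (jr_le (proj1 Ht))
  end.

Lemma wcross_eq x l H k h1 h2 : @wcross x l H = @cross x l k h1 h2.
Proof. unfold wcross. destruct (constructive_indefinite_description _ H). apply cross_indep. Qed.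

Lemma cross_pre x y l k (m : Hom x y) h1 h2 h1' :
  cmp (@cross y l k h1 h2) (fm q m) = @cross x l k h1' h2.
Proof.
  unfold cross. rewrite <- !cmp_assoc. f_equal. f_equal.
  rewrite <- fm_cmp. f_equal. apply (hu_of (@pX D)).
Qed.

Lemma cross_post x l l' k (m : Hom l l') h1 h2 h2' :
  cmp (fm p m) (@cross x l k h1 h2) = @cross x l' k h1 h2'.
Proof.
  unfold cross. rewrite !cmp_assoc. f_equal.
  rewrite <- fm_cmp. rewrite ((hu_of (@pL D)) _ _ (cmp m (pick h2)) (pick h2')). reflexivity.
Qed.

Definition wo (a : PO) : Z := match a with inl x => q x | inr l => p (proj1_sig l) end.

Definition wm (a b : PO) : leP a b -> Hom (wo a) (wo b) :=
  match a as a0, b as b0 return leP a0 b0 -> Hom (wo a0) (wo b0) with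
  | inl x, inl x' => fun H => fm q (pick H)
  | inr l, inr l' => fun H => fm p (pick H)
  | inl x, inr l => fun H => wcross H
  | inr l, inl x => fun H => False_rect _ H
  end.

Definition wF : Functor PCat Z.
Proof.
  refine (@Build_Functor PCat Z wo wm _ _).
  - intros [x|l]; simpl.
    + rewrite ((hu_of (@pX D)) _ _ (pick _) (idm x)). apply fm_id.
    + rewrite ((hu_of (@pL D)) _ _ (pick _) (idm _)). apply fm_id.
  - intros [x|l] [y|l'] [z|l''] m1 m2; simpl in *; try contradiction.
    + rewrite <- fm_cmp. f_equal. apply (hu_of (@pX D)).
    + destruct m2 as [t [Et Ht]] eqn:Em2. clear Em2.
      pose proof (jr_le Et) as h2.
      rewrite (wcross_eq _ (k := r t) Ht h2).
      rewrite (wcross_eq _ (k := r t) (le_trans m1 Ht) h2).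
      symmetry. apply cross_pre.
    + pose proof m1 as [t [Et Ht]].
      pose proof (jr_le Et) as h2.
      rewrite (wcross_eq _ (k := r t) Ht h2).
      rewrite (wcross_eq _ (k := r t) Ht (le_trans h2 m2)).
      symmetry. apply cross_post.
    + rewrite <- fm_cmp. f_equal. apply (hu_of (@pL D)).
Defined.

Lemma wF_v : feq (compF wF vP) q.
Proof.
  split; [intros; reflexivity|].
  intros [[x y] m]. unfold arr; simpl.
  rewrite ((hu_of (@pX D)) _ _ (pick _) m). reflexivity.
Qed.

Lemma wF_u : feq (compF wF uP) p.
Proof.
  split.
  - intros l; simpl.
    destruct (uPo_cases l) as [[k [Ek Eu]]|[Hn Eu]]; rewrite Eu; simpl; subst.
    + apply EO.
    + reflexivity.
  - intros [[l l'] m]. simpl in m.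
    change (mkArr (wm (uP_mono m)) = mkArr (fm p m)).
    generalize (uP_mono m).
    destruct (uPo_cases l) as [[k [Ek Eu]]|[Hn Eu]]; rewrite Eu;
    destruct (uPo_cases l') as [[k' [Ek' Eu']]|[Hn' Eu']]; rewrite Eu'; simpl in *; intro H; subst.
    + set (mm := pick (jfull (inhabits m))).
      rewrite ((hu_of (@pX D)) _ _ (pick H) (fm f mm)).
      change (arr (compF q f) (mkArr mm) = mkArr (fm p m)).
      rewrite <- (proj2 Hpq). unfold arr; simpl.
      rewrite ((hu_of (@pL D)) _ _ (fm j mm) m). reflexivity.
    + rewrite (wcross_eq _ (k := k) (le_refl _) (inhabits m)).
      unfold cross.
      rewrite ((hu_of (@pX D)) _ _ (pick _) (idm _)), fm_id, cmp_id_r.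
      rewrite ((hu_of (@pL D)) _ _ (pick _) m).
      apply castid_r.
    + exfalso. apply Hn. apply (@Hsieve D k'). exact (inhabits m).
    + rewrite ((hu_of (@pL D)) _ _ (pick H) m). reflexivity.
Qed.

Lemma wF_unique (w' : Functor PCat Z) :
  feq (compF w' uP) p -> feq (compF w' vP) q -> feq w' wF.
Proof.
  intros Hu Hv. split.
  - intros [x|[l Hl]].
    + exact (proj1 Hv x).
    + transitivity (w' (uPo l)); [f_equal; symmetry; apply uPo_nK | exact (proj1 Hu l)].
  - intros [[a b] H]. destruct a as [x|[l Hl]]; destruct b as [x'|[l' Hl']]; simpl in H.
    + transitivity (arr (compF w' vP) (mkArr (pick H))).
      { unfold arr; simpl. set (H2 := inhabits (pick H)). clearbody H2.
        rewrite (proof_irrelevance _ H2 H). reflexivity. }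
      rewrite (proj2 Hv). reflexivity.
    + pose proof H as [t [Et Ht]]. simpl in Et.
      pose proof (jr_le Et) as h2.
      transitivity (mkArr (@wcross x l' H)); [|reflexivity].
      rewrite (wcross_eq _ (k := r t) Ht h2).
      set (A := (Ht : @Hom PCat (inl x) (inl (f (r t))))).
      set (E := (eq_sym (uPo_K (r t)) : @eq (Ob PCat) (inl (f (r t))) (uPo (j (r t))))).
      set (B := fm uP (pick h2)).
      transitivity (arr w' (mkArr (cmp B (cmp (@castid PCat _ _ E) A)))).
      { f_equal. apply arr_eq_hu; [apply hu_P|reflexivity|]. symmetry; apply uPo_nK. }
      change (mkArr (fm w' (cmp B (cmp (@castid PCat _ _ E) A))) = mkArr (cross A h2)). rewrite !fm_cmp. unfold cross.
      apply mkArr_cmp.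
      * rewrite fm_castid, castid_l, castid_l.
        transitivity (arr (compF w' vP) (mkArr (pick Ht))).
        { unfold arr; simpl. unfold A. set (H2 := inhabits (pick Ht)). clearbody H2.
          rewrite (proof_irrelevance _ H2 Ht). reflexivity. }
        rewrite (proj2 Hv). reflexivity.
      * change (arr (compF w' uP) (mkArr (pick h2)) = arr p (mkArr (pick h2))).
        apply (proj2 Hu).
    + destruct H.
    + transitivity (arr w' (arr uP (mkArr (pick H)))).
      { f_equal. apply (@arr_eq_hu PCat hu_P); symmetry; apply uPo_nK. }
      change (arr (compF w' uP) (mkArr (pick H)) = arr p (mkArr (pick H))). apply (proj2 Hu).
Qed.
End Univ.

Theorem core_pushout : is_pushout j f uP vP.
Proof.
  split; [apply PO_comm|].
  intros Z p q Hpq. exists (wF Hpq). split; [apply wF_u|split; [apply wF_v|]].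
  intros w' H1 H2. apply wF_unique; auto.
Qed.
End Core.

Lemma eqv (G : Group) (C D : GCat G) (F : GFunctor C D) g x :
  F (act C g x) = act D g (F x).
Proof. exact (proj1 (gf_eqv F g) x). Qed.

Lemma act_inv_l (G : Group) (C : GCat G) g x : act C (ginv g) (act C g x) = x.
Proof.
  transitivity (act C (gmul (ginv g) g) x).
  - symmetry. exact (proj1 (act_mul C (ginv g) g) x).
  - rewrite gmulVg. exact (proj1 (act_one C) x).
Qed.

Definition gcompF (G : Group) (A B C : GCat G) (F' : GFunctor B C) (F : GFunctor A B) : GFunctor A C.
Proof.
  refine {| gf := compF F' F |}. intro g.
  rewrite feq_assoc. rewrite (gf_eqv F g). rewrite <- feq_assoc.
  rewrite (gf_eqv F' g). apply feq_assoc.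
Defined.

Definition gidF (G : Group) (A : GCat G) : GFunctor A A.
Proof. refine {| gf := idF A |}. intro g. split; reflexivity. Defined.

Lemma fix_poset (G : Group) (H : G -> Prop) (C : GCat G) : is_poset C -> is_poset (C ^^ H).
Proof.
  intros [hu anti]. split.
  - intros x y m1 m2. apply sig_eq. apply hu.
  - intros x y m1 m2. apply sig_eq. exact (anti _ _ (proj1_sig m1) (proj1_sig m2)).
Qed.

Definition fixhom_of (G : Group) (H : G -> Prop) (C : GCat G) (hu : hom_unique C)
  (x y : fixob C H) (m : Hom (proj1_sig x) (proj1_sig y)) : fixhom x y.
Proof.
  exists m. intros h Hh. unfold arr; simpl. apply arr_eq_hu; [exact hu| |].
  - exact (proj2_sig x h Hh).
  - exact (proj2_sig y h Hh).
Defined.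

Lemma po_transfer (A B C D D' : Cat) (a : Functor A B) (b : Functor A C)
  (u : Functor B D) (v : Functor C D) (u' : Functor B D') (v' : Functor C D')
  (phi : Functor D D') (psi : Functor D' D) :
  is_pushout a b u v -> feq (compF psi phi) (idF D) -> feq (compF phi psi) (idF D') ->
  feq (compF phi u) u' -> feq (compF phi v) v' -> is_pushout a b u' v'.
Proof.
  intros [Hc Hu] H1 H2 H3 H4. split.
  - rewrite <- H3, <- H4. rewrite !feq_assoc. rewrite Hc. reflexivity.
  - intros Z p q Hpq. destruct (Hu Z p q Hpq) as [w [Hw1 [Hw2 Hw3]]].
    exists (compF w psi). split; [|split].
    + rewrite <- H3. rewrite feq_assoc. rewrite <- (feq_assoc psi phi u). rewrite H1, feq_idl. exact Hw1.
    + rewrite <- H4. rewrite feq_assoc. rewrite <- (feq_assoc psi phi v). rewrite H1, feq_idl. exact Hw2.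
    + intros w' Hw'1 Hw'2.
      assert (E : feq (compF w' phi) w).
      { apply Hw3.
        - rewrite feq_assoc, H3. exact Hw'1.
        - rewrite feq_assoc, H4. exact Hw'2. }
      rewrite <- E. rewrite feq_assoc, H2. symmetry. apply feq_idr.
Qed.

Section GPart.
Variables (G : Group) (K L X T : GCat G).
Variables (j : GFunctor K L) (f : GFunctor K X) (i : GFunctor K T) (jj : GFunctor T L) (r : GFunctor T K).
Hypotheses (hpK : is_poset K) (hpL : is_poset L) (hpX : is_poset X) (hpT : is_poset T).
Hypothesis hjo : forall k, jj (i k) = j k.
Hypothesis hri : forall k, r (i k) = k.
Hypothesis heps : forall t, le (i (r t)) t.
Hypothesis hjjinj : forall t t', jj t = jj t' -> t = t'.
Hypothesis hjjfull : forall t t', le (jj t) (jj t') -> le t t'.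
Hypothesis hsieve : forall k l, le l (j k) -> exists k', j k' = l.
Hypothesis hcosieve : forall t l, le (jj t) l -> exists t', jj t' = l.

Definition D0 : DD :=
  @Build_DD K L X T j f i jj r hpK hpL hpX hpT hjo hri heps hjjinj hjjfull hsieve hcosieve.

Lemma notK_act g l : @notK D0 l -> @notK D0 (act L g l).
Proof.
  intros Hn [k Ek]. apply Hn. exists (act K (ginv g) k). simpl in *.
  rewrite (eqv j), Ek. apply act_inv_l.
Qed.

Definition actPo (g : G) (a : PO D0) : PO D0 :=
  match a with
  | inl x => inl (act X g x)
  | inr l => inr (exist _ (act L g (proj1_sig l)) (@notK_act g (proj1_sig l) (proj2_sig l)))
  end.

Lemma actP_mono g a b : leP a b -> leP (actPo g a) (actPo g b).
Proof.
  destruct a as [x|[l Hl]], b as [y|[l' Hl']]; simpl; try tauto.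
  - apply le_map.
  - intros [t [Et Ht]]. exists (act T g t). simpl in *. split.
    + rewrite (eqv jj), Et. reflexivity.
    + rewrite (eqv r), (eqv f). apply le_map. exact Ht.
  - apply le_map.
Qed.

Definition actP (g : G) : Functor (PCat D0) (PCat D0) :=
  @mkPF (PCat D0) (PCat D0) (@hu_P D0) (actPo g) (fun a b m => @actP_mono g a b m).

Definition P_G : GCat G.
Proof.
  refine {| gc := PCat D0; act := actP |}.
  - apply feq_hu; [apply hu_P|]. intros [x|[l Hl]]; simpl.
    + f_equal. exact (proj1 (act_one X) x).
    + f_equal. apply sig_eq. simpl. exact (proj1 (act_one L) l).
  - intros g h. apply feq_hu; [apply hu_P|]. intros [x|[l Hl]]; simpl.
    + f_equal. exact (proj1 (act_mul X g h) x).
    + f_equal. apply sig_eq. simpl. exact (proj1 (act_mul L g h) l).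
Defined.

Lemma uP_eqv : equivariant (C := L) (D := P_G) (uP D0 : Functor L P_G).
Proof.
  intro g. apply feq_hu; [apply hu_P|]. intro l. simpl.
  destruct (@uPo_cases D0 l) as [[k [Ek Eu]]|[Hn Eu]].
  - subst l. simpl in *. rewrite <- (eqv j). rewrite (@uPo_K D0). rewrite Eu. simpl.
    rewrite (eqv f). reflexivity.
  - rewrite Eu. rewrite (uPo_nK (@notK_act g l Hn)). simpl. reflexivity.
Qed.

Lemma vP_eqv : equivariant (C := X) (D := P_G) (vP D0 : Functor X P_G).
Proof. intro g. apply feq_hu; [apply hu_P|]. intro x. reflexivity. Qed.

Definition uPG : GFunctor L P_G := @Build_GFunctor G L P_G (uP D0) uP_eqv.
Definition vPG : GFunctor X P_G := @Build_GFunctor G X P_G (vP D0) vP_eqv.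

Definition wFG (Y : GCat G) (p : GFunctor L Y) (q : GFunctor X Y)
  (Hpq : feq (compF p j) (compF q f)) : Functor P_G Y := @wF D0 Y p q Hpq.

Lemma wF_eqv (Y : GCat G) (p : GFunctor L Y) (q : GFunctor X Y)
  (Hpq : feq (compF p j) (compF q f)) :
  equivariant (wFG Hpq).
Proof.
  intro g.
  assert (H'' : feq (compF (compF (act Y g) p) j) (compF (compF (act Y g) q) f)).
  { rewrite !feq_assoc. rewrite Hpq. reflexivity. }
  pose proof (@wF_u D0 Y p q Hpq) as Hu.
  pose proof (@wF_v D0 Y p q Hpq) as Hv.
  transitivity (@wF D0 Y (compF (act Y g) p) (compF (act Y g) q) H'').
  - apply (@wF_unique D0 Y (compF (act Y g) p) (compF (act Y g) q) H'').
    + rewrite feq_assoc. change (feq (compF (wFG Hpq) (compF (actP g) (uP D0))) (compF (act Y g) p)).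
      rewrite <- (uP_eqv g). rewrite <- feq_assoc. unfold wFG. rewrite Hu. apply (gf_eqv p g).
    + rewrite feq_assoc. change (feq (compF (wFG Hpq) (compF (actP g) (vP D0))) (compF (act Y g) q)).
      rewrite <- (vP_eqv g). rewrite <- feq_assoc. unfold wFG. rewrite Hv. apply (gf_eqv q g).
  - symmetry. apply (@wF_unique D0 Y (compF (act Y g) p) (compF (act Y g) q) H'').
    + rewrite feq_assoc. unfold wFG. rewrite Hu. reflexivity.
    + rewrite feq_assoc. unfold wFG. rewrite Hv. reflexivity.
Qed.
Variable H : G -> Prop.

Lemma h1jo : forall k : K ^^ H, fixF H jj (fixF H i k) = fixF H j k.
Proof. intro k; apply sig_eq; simpl; apply hjo. Qed.
Lemma h1ri : forall k : K ^^ H, fixF H r (fixF H i k) = k.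
Proof. intro k; apply sig_eq; simpl; apply hri. Qed.
Lemma h1eps : forall t : T ^^ H, le (fixF H i (fixF H r t)) t.
Proof. intro t. destruct (heps (proj1_sig t)) as [m]. apply inhabits; refine (@fixhom_of G H _ (hu_of hpT) _ _ _); exact m. Qed.
Lemma h1jjinj : forall t t' : T ^^ H, fixF H jj t = fixF H jj t' -> t = t'.
Proof. intros t t' E. apply sig_eq. apply hjjinj. exact (f_equal (@proj1_sig _ _) E). Qed.
Lemma h1jjfull : forall t t' : T ^^ H, le (fixF H jj t) (fixF H jj t') -> le t t'.
Proof.
  intros t t' [m]. destruct (hjjfull (inhabits (proj1_sig m))) as [m'].
  apply inhabits; refine (@fixhom_of G H _ (hu_of hpT) _ _ _); exact m'.
Qed.

Lemma fixed_of_j k (l0 : L) : j k = l0 -> (forall h, H h -> act L h l0 = l0) ->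
  forall h, H h -> act K h k = k.
Proof.
  intros E fp h Hh. apply (@jinj D0). simpl. rewrite (eqv j), E. apply fp; auto.
Qed.
Lemma fixed_of_jj t (l0 : L) : jj t = l0 -> (forall h, H h -> act L h l0 = l0) ->
  forall h, H h -> act T h t = t.
Proof.
  intros E fp h Hh. apply hjjinj. rewrite (eqv jj), E. apply fp; auto.
Qed.

Lemma h1sieve : forall (k : K ^^ H) (l : L ^^ H), le l (fixF H j k) -> exists k', fixF H j k' = l.
Proof.
  intros k l [m]. destruct (hsieve (inhabits (proj1_sig m))) as [k' E].
  exists (exist _ k' (fixed_of_j E (proj2_sig l))). apply sig_eq. exact E.
Qed.
Lemma h1cosieve : forall (t : T ^^ H) (l : L ^^ H), le (fixF H jj t) l -> exists t', fixF H jj t' = l.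
Proof.
  intros t l [m]. destruct (hcosieve (inhabits (proj1_sig m))) as [t' E].
  exists (exist _ t' (fixed_of_jj E (proj2_sig l))). apply sig_eq. exact E.
Qed.

Definition D1 : DD :=
  @Build_DD (K ^^ H) (L ^^ H) (X ^^ H) (T ^^ H) (fixF H j) (fixF H f) (fixF H i) (fixF H jj) (fixF H r)
    (fix_poset H hpK) (fix_poset H hpL) (fix_poset H hpX) (fix_poset H hpT)
    h1jo h1ri h1eps h1jjinj h1jjfull h1sieve h1cosieve.

Variables (Y : GCat G) (iL : GFunctor L Y) (iX : GFunctor X Y) (wP : GFunctor P_G Y) (wY : GFunctor Y P_G).
Hypothesis hYp : is_poset Y.
Hypothesis hPY : forall a, wY (wP a) = a.
Hypothesis hYP : forall y, wP (wY y) = y.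
Hypothesis hwl : forall x, wP (inl x) = iX x.
Hypothesis hwu : forall l, wP (@uPo D0 l) = iL l.
Hypothesis hc : forall k, iL (j k) = iX (f k).

Lemma notK_unfix (l : L ^^ H) : @notK D1 l -> @notK D0 (proj1_sig l).
Proof.
  intros Hn [k E]. apply Hn. exists (exist _ k (fixed_of_j E (proj2_sig l))). apply sig_eq. exact E.
Qed.

Definition betao (a : PO D1) : PO D0 :=
  match a with
  | inl x => inl (proj1_sig x)
  | inr l => inr (exist _ (proj1_sig (proj1_sig l)) (@notK_unfix (proj1_sig l) (proj2_sig l)))
  end.

Lemma betao_fixed a h : H h -> actPo h (betao a) = betao a.
Proof.
  destruct a as [x|[l Hl]]; simpl; intro Hh.
  - f_equal. exact (proj2_sig x h Hh).
  - f_equal. apply sig_eq. simpl. exact (proj2_sig l h Hh).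
Qed.

Lemma beta_mono a b : @leP D1 a b -> @leP D0 (betao a) (betao b).
Proof.
  destruct a as [x|[l Hl]], b as [y|[l' Hl']]; simpl; try tauto.
  - intros [m]. exact (inhabits (proj1_sig m)).
  - intros [t [Et [m]]]. exists (proj1_sig t). split.
    + exact (f_equal (@proj1_sig _ _) Et).
    + exact (inhabits (proj1_sig m)).
  - intros [m]. exact (inhabits (proj1_sig m)).
Qed.

Lemma phio_fixed (a : PO D1) : forall h, H h -> act Y h (wP (betao a)) = wP (betao a).
Proof.
  intros h Hh. rewrite <- (eqv wP). change (wP (actPo h (betao a)) = wP (betao a)).
  rewrite betao_fixed; auto.
Qed.

Definition phio (a : PO D1) : fixob Y H := exist _ (wP (betao a)) (@phio_fixed a).

Definition phi : Functor (PCat D1) (Y ^^ H) :=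
  @mkPF (PCat D1) (Y ^^ H) (hu_of (fix_poset H hYp)) phio
    (fun a b m => @fixhom_of G H Y (hu_of hYp) (phio a) (phio b) (fm wP (@beta_mono a b m))).

Lemma inl_inj_PO (x y : X) : (inl x : PO D0) = inl y -> x = y.
Proof. intro E; injection E; auto. Qed.
Lemma inr_inj_PO (s s' : {l : L | @notK D0 l}) : (inr s : PO D0) = inr s' -> proj1_sig s = proj1_sig s'.
Proof. intro E; injection E; intros; subst; reflexivity. Qed.

Lemma notK_fix (l0 : L) (Hl : @notK D0 l0) (fp : forall h, H h -> act L h l0 = l0) :
  @notK D1 (exist _ l0 fp).
Proof. intros [k E]. apply Hl. exists (proj1_sig k). exact (f_equal (@proj1_sig _ _) E). Qed.

Definition mkL1 (l : {l : L | @notK D0 l})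
  (fp : forall h, H h -> act L h (proj1_sig l) = proj1_sig l) : {l : L ^^ H | @notK D1 l} :=
  exist (fun l => @notK D1 l) (exist (fun x => forall h, H h -> act L h x = x) (proj1_sig l) fp)
    (@notK_fix (proj1_sig l) (proj2_sig l) fp).

Definition mkX1 (x : X) (fp : forall h, H h -> act X h x = x) : X ^^ H :=
  exist (fun x => forall h, H h -> act X h x = x) x fp.

Definition alphao (a : PO D0) : (forall h, H h -> actPo h a = a) -> PO D1 :=
  match a as a0 return (forall h, H h -> actPo h a0 = a0) -> PO D1 with
  | inl x => fun ha => inl (mkX1 (fun h Hh => inl_inj_PO (ha h Hh)))
  | inr l => fun ha => inr (@mkL1 l (fun h Hh => inr_inj_PO (ha h Hh)))
  end.

Lemma alpha_mono a b ha hb : @leP D0 a b -> @leP D1 (@alphao a ha) (@alphao b hb).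
Proof.
  destruct a as [x|[l Hl]], b as [y|[l' Hl']]; simpl; try tauto.
  - intros [m]. apply inhabits; refine (@fixhom_of G H _ (hu_of hpX) _ _ _); exact m.
  - intros [t [Et [m]]]. simpl in Et.
    exists (exist _ t (fixed_of_jj Et (fun h Hh => inr_inj_PO (hb h Hh)))). split.
    + apply sig_eq. exact Et.
    + apply inhabits; refine (@fixhom_of G H _ (hu_of hpX) _ _ _); exact m.
  - intros [m]. apply inhabits; refine (@fixhom_of G H _ (hu_of hpL) _ _ _); exact m.
Qed.

Lemma psi_fixed (y : fixob Y H) : forall h, H h -> actPo h (wY (proj1_sig y)) = wY (proj1_sig y).
Proof.
  intros h Hh. change (act P_G h (wY (proj1_sig y)) = wY (proj1_sig y)).
  rewrite <- (eqv wY). f_equal. exact (proj2_sig y h Hh).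
Qed.

Definition psio (y : fixob Y H) : PO D1 := @alphao (wY (proj1_sig y)) (@psi_fixed y).

Definition psi : Functor (Y ^^ H) (PCat D1) :=
  @mkPF (Y ^^ H) (PCat D1) (@hu_P D1) psio
    (fun y y' m => @alpha_mono _ _ (@psi_fixed y) (@psi_fixed y') (fm wY (proj1_sig m))).

Lemma alphao_ext a a' ha ha' : a = a' -> @alphao a ha = @alphao a' ha'.
Proof. intro E; subst. f_equal. apply proof_irrelevance. Qed.

Lemma alpha_beta a ha : @alphao (betao a) ha = a.
Proof.
  destruct a as [[x px]|[[l pl] Hl]]; simpl.
  - f_equal. apply sig_eq. reflexivity.
  - f_equal. apply sig_eq. simpl. apply sig_eq. reflexivity.
Qed.

Lemma beta_alpha a ha : betao (@alphao a ha) = a.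
Proof.
  destruct a as [x|[l Hl]]; simpl; f_equal. apply sig_eq. reflexivity.
Qed.

Lemma part2 : is_pushout (fixF H j) (fixF H f) (fixF H iL) (fixF H iX).
Proof.
  apply (@po_transfer _ _ _ _ _ _ _ _ _ _ _ phi psi (core_pushout D1)).
  - apply feq_hu; [apply (@hu_P D1)|]. intro a. simpl. unfold psio; simpl.
    rewrite (@alphao_ext _ (betao a) _ (fun h Hh => betao_fixed a Hh) (hPY (betao a))).
    apply alpha_beta.
  - apply feq_hu; [apply (hu_of (fix_poset H hYp))|]. intro y. apply sig_eq. simpl.
    unfold psio. rewrite beta_alpha. apply hYP.
  - apply feq_hu; [apply (hu_of (fix_poset H hYp))|]. intro l. apply sig_eq. simpl.
    destruct (@uPo_cases D1 l) as [[k [Ek Eu]]|[Hn Eu]]; rewrite Eu; simpl.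
    + rewrite hwl, <- hc. f_equal. exact (f_equal (@proj1_sig _ _) Ek).
    + transitivity (wP (@uPo D0 (proj1_sig l))); [f_equal; symmetry; apply (@uPo_nK D0) | apply hwu].
  - apply feq_hu; [apply (hu_of (fix_poset H hYp))|]. intro x. apply sig_eq. simpl. apply hwl.
Qed.
End GPart.
Unset Implicit Arguments.

Arguments P_G : clear implicits.
Arguments uPG : clear implicits.
Arguments vPG : clear implicits.
Arguments wFG : clear implicits.
Arguments wF_eqv : clear implicits.
Arguments part2 : clear implicits.
Arguments D0 : clear implicits.

Lemma main_data (G : Group) (K L X T : GCat G) (j : GFunctor K L)
  (f : GFunctor K X) (i : GFunctor K T) (jj : GFunctor T L) (r : GFunctor T K)
  (hpK : is_poset K) (hpL : is_poset L) (hpX : is_poset X) (hpT : is_poset T)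
  (hjo : forall k : K, jj (i k) = j k)
  (hri : forall k : K, r (i k) = k)
  (heps : forall t : T, le (i (r t)) t)
  (hjjinj : forall t t' : T, jj t = jj t' -> t = t')
  (hjjfull : forall t t' : T, le (jj t) (jj t') -> le t t')
  (hsieve : forall (k : K) (l : L), le l (j k) -> exists k' : K, j k' = l)
  (hcosieve : forall (t : T) (l : L), le (jj t) l -> exists t' : T, jj t' = l)
  (Y : GCat G) (iL : GFunctor L Y) (iX : GFunctor X Y) :
  is_Gpushout j f iL iX ->
  is_poset Y /\
  forall H : G -> Prop, is_subgroup H ->
    is_pushout (fixF H j) (fixF H f) (fixF H iL) (fixF H iX).
Proof.
  intros [Hc Hu].
  pose (DD0 := D0 G K L X T j f i jj r hpK hpL hpX hpT hjo hri heps hjjinj hjjfull hsieve hcosieve).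
  pose (PG := P_G G K L X T j f i jj r hpK hpL hpX hpT hjo hri heps hjjinj hjjfull hsieve hcosieve).
  pose (uG := uPG G K L X T j f i jj r hpK hpL hpX hpT hjo hri heps hjjinj hjjfull hsieve hcosieve).
  pose (vG := vPG G K L X T j f i jj r hpK hpL hpX hpT hjo hri heps hjjinj hjjfull hsieve hcosieve).
  assert (Hcomm : feq (compF uG j) (compF vG f)) by exact (PO_comm DD0).
  destruct (Hu PG uG vG Hcomm) as [wY [HwY1 [HwY2 _]]].
  pose (wP := @Build_GFunctor G PG Y
          (wFG G K L X T j f i jj r hpK hpL hpX hpT hjo hri heps hjjinj hjjfull hsieve hcosieve Y iL iX Hc)
          (wF_eqv G K L X T j f i jj r hpK hpL hpX hpT hjo hri heps hjjinj hjjfull hsieve hcosieve Y iL iX Hc)).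
  assert (Hwu : feq (compF wP uG) iL) by exact (@wF_u DD0 Y iL iX Hc).
  assert (Hwv : feq (compF wP vG) iX) by exact (@wF_v DD0 Y iL iX Hc).
  assert (Hid : feq (compF wP wY) (idF Y)).
  { destruct (Hu Y iL iX Hc) as [w0 [_ [_ U]]].
    transitivity (gf w0).
    - apply (U (gcompF wP wY)).
      + change (feq (compF (compF wP wY) iL) iL). rewrite feq_assoc, HwY1. exact Hwu.
      + change (feq (compF (compF wP wY) iX) iX). rewrite feq_assoc, HwY2. exact Hwv.
    - symmetry. apply (U (gidF Y)); apply feq_idl. }
  assert (Hid2 : feq (compF wY wP) (idF PG)).
  { transitivity (@wF DD0 (PCat DD0) (uP DD0) (vP DD0) (PO_comm DD0)).
    - apply (@wF_unique DD0 (PCat DD0) (uP DD0) (vP DD0) (PO_comm DD0)).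
      + change (feq (compF wY (compF wP uG)) uG). rewrite Hwu. exact HwY1.
      + change (feq (compF wY (compF wP vG)) vG). rewrite Hwv. exact HwY2.
    - symmetry. apply (@wF_unique DD0 (PCat DD0) (uP DD0) (vP DD0) (PO_comm DD0)); apply feq_idl. }
  assert (hYp : is_poset Y).
  { split.
    - intros y y' m1 m2. apply mkArr_inj.
      change (arr (idF Y) (mkArr m1) = arr (idF Y) (mkArr m2)).
      rewrite <- !(proj2 Hid).
      change (arr wP (arr wY (mkArr m1)) = arr wP (arr wY (mkArr m2))). f_equal.
      unfold arr; simpl. apply (@arr_eq_hu (PCat DD0) (@hu_P DD0)); reflexivity.
    - intros y y' m1 m2.
      transitivity (wP (wY y)); [symmetry; exact (proj1 Hid y)|].
      transitivity (wP (wY y')); [|exact (proj1 Hid y')]. f_equal.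
      exact (proj2 (P_poset DD0) _ _ (fm wY m1) (fm wY m2)). }
  split; [exact hYp|].
  intros H _.
  apply (part2 G K L X T j f i jj r hpK hpL hpX hpT hjo hri heps hjjinj hjjfull hsieve hcosieve
           H Y iL iX wP wY hYp).
  - intro a. exact (proj1 Hid2 a).
  - intro y. exact (proj1 Hid y).
  - intro x. exact (proj1 Hwv x).
  - intro l. exact (proj1 Hwu l).
  - intro k. exact (proj1 Hc k).
Qed.

Theorem lemma4p8 (G : Group) (K L X Y : GCat G)
    (j : GFunctor K L) (f : GFunctor K X) (iL : GFunctor L Y) (iX : GFunctor X Y) :
  is_poset K -> is_poset L -> is_poset X ->
  dwyer_map j ->
  is_Gpushout j f iL iX ->
  is_poset Y /\
  forall H : G -> Prop, is_subgroup H ->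
    is_pushout (fixF H j) (fixF H f) (fixF H iL) (fixF H iX).
Proof.
  intros pK pL pX [Hsv [T [i [jj [r [eta [Hf [Hcos [Hinc [Hadj Heta]]]]]]]]]] Hpo.
  assert (hpT : is_poset T).
  { split.
    - intros t t' m1 m2. apply mkArr_inj. apply (proj2 (proj1 Hcos)).
      unfold arr; simpl. apply (arr_eq_hu (hu_of pL)); reflexivity.
    - intros t t' m1 m2. apply (proj1 (proj1 Hcos)). exact (proj2 pL _ _ (fm jj m1) (fm jj m2)). }
  apply (main_data G K L X T j f i jj r pK pL pX hpT).
  - intro k. exact (proj1 Hf k).
  - intro k. exact (f_equal (fun a : Arr K => snd (projT1 a)) (Heta k)).
  - destruct Hadj as [_ [eps _]]. intro t. exact (inhabits (eps t)).
  - exact (proj1 (proj1 Hcos)).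
  - intros t t' [m]. destruct (proj2 Hcos t (jj t') m) as [c' [m' E]].
    pose proof (f_equal (fun a : Arr L => snd (projT1 a)) E) as E'. simpl in E'.
    apply (proj1 (proj1 Hcos)) in E'. subst c'. exact (inhabits m').
  - intros k l [m]. destruct (proj2 Hsv k l m) as [c' [m' E]]. exists c'.
    exact (f_equal (fun a : Arr L => fst (projT1 a)) E).
  - intros t l [m]. destruct (proj2 Hcos t l m) as [c' [m' E]]. exists c'.
    exact (f_equal (fun a : Arr L => snd (projT1 a)) E).
  - exact Hpo.
Qed.
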